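(* For every Zygmund vector field $X$ on $\mathbb{S}^1$, its width satisfies $w(X)\le\frac83\lVert X\rVert_{cr}$.
   Context: A vector field $X$ on $\mathbb{S}^1=\partial\mathbb{D}^2$ is written $X(z)=iz\phi_X(z)$, $\phi_X:\mathbb{S}^1\to\mathbb{R}$. For $\eta\in\overline{\mathbb{D}^2}$, $\phi_X^-(\eta)=\sup\{a(\eta):a:\mathbb{R}^2\to\mathbb{R}\text{ affine},a|_{\mathbb{S}^1}\le\phi_X\}$ and $\phi_X^+(\eta)=\inf\{a(\eta):a\text{ affine},a|_{\mathbb{S}^1}\ge\phi_X\}$. The width is $w(X)=\sup_{\eta\in\mathbb{D}^2}\frac{\phi_X^+(\eta)-\phi_X^-(\eta)}{\sqrt{1-|\eta|^2}}$. Cross-ratio norm: identify $\mathbb{S}^1$ with $\mathbb{RP}^1=\mathbb{R}\cup\{\infty\}$ by a projective identification and write $X$ as $X(x)\partial_x$; for $Q=[a,b,c,d]$, $\mathrm{cr}(Q)=\frac{(b-a)(d-c)}{(c-b)(d-a)}$, $X[Q]=\frac{X(b)-X(a)}{b-a}-\frac{X(c)-X(b)}{c-b}+\frac{X(d)-X(c)}{d-c}-\frac{X(a)-X(d)}{a-d}$, and $\lVert X\rVert_{cr}=\sup_{\mathrm{cr}(Q)=1}|X[Q]|$. $X$ is Zygmund if it is continuous and $\lVert X\rVert_{cr}<\infty$. *)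

(* Defs.v *)
From HB Require Import structures.
From mathcomp Require Import all_boot all_order all_algebra.
From mathcomp Require Import all_classical all_reals all_analysis.
Set Implicit Arguments. Unset Strict Implicit. Unset Printing Implicit Defensive.
Import Order.TTheory GRing.Theory Num.Theory numFieldNormedType.Exports.
Local Open Scope classical_set_scope.
Local Open Scope ring_scope.

Section ZygmundDefs.
Variable R : realType.

Definition S1 : set (R * R) := [set p | p.1 ^+ 2 + p.2 ^+ 2 = 1].
Definition D2 : set (R * R) := [set p | p.1 ^+ 2 + p.2 ^+ 2 < 1].

(* A vector field X on S^1 is given by phi_X : S^1 -> R via X(z) = i z phi_X(z);
   we represent phi_X as a function R*R -> R whose values off S1 are irrelevant. *)

Definition affine_eval (c : R * R * R) (p : R * R) : R :=
  c.1.1 + c.1.2 * p.1 + c.2 * p.2.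

Definition phi_minus (phi : R * R -> R) (eta : R * R) : \bar R :=
  ereal_sup [set (affine_eval c eta)%:E
            | c in [set c | forall p, S1 p -> affine_eval c p <= phi p]].

Definition phi_plus (phi : R * R -> R) (eta : R * R) : \bar R :=
  ereal_inf [set (affine_eval c eta)%:E
            | c in [set c | forall p, S1 p -> phi p <= affine_eval c p]].

Definition width (phi : R * R -> R) : \bar R :=
  ereal_sup [set ((phi_plus phi eta - phi_minus phi eta)
                  * ((Num.sqrt (1 - (eta.1 ^+ 2 + eta.2 ^+ 2)))^-1)%:E)%E
            | eta in D2].

(* Projective identification RP^1 -> S^1 (Cayley transform):
   x |-> z = (1 + i x)/(1 - i x) = e^{i theta} with x = tan(theta/2);
   it sends infinity to -1. *)
Definition cayley (x : R) : R * R :=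
  ((1 - x ^+ 2) / (1 + x ^+ 2), 2 * x / (1 + x ^+ 2)).

(* The vector field X = phi d/dtheta written in the x-coordinate: X(x) d/dx,
   with dx/dtheta = (1 + x^2)/2. *)
Definition Xline (phi : R * R -> R) (x : R) : R :=
  (1 + x ^+ 2) / 2 * phi (cayley x).

Definition cr (a b c d : R) : R := (b - a) * (d - c) / ((c - b) * (d - a)).

Definition Xcr (X : R -> R) (a b c d : R) : R :=
  (X b - X a) / (b - a) - (X c - X b) / (c - b)
  + (X d - X c) / (d - c) - (X a - X d) / (a - d).

(* Quadruples of pairwise distinct points with cr = 1.  (Quadruples through
   infinity are omitted; by continuity of X this does not change the sup.) *)
Definition cr1_quads : set (R * R * R * R) :=
  [set Q | let: (a, b, c, d) := Q in
           uniq [:: a; b; c; d]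
           /\ cr a b c d = 1].

Definition cr_norm (phi : R * R -> R) : \bar R :=
  ereal_sup [set (`| let: (a, b, c, d) := Q in Xcr (Xline phi) a b c d |)%:E
            | Q in cr1_quads].

End ZygmundDefs.

(* Main.v *)
Require Import Defs.
From HB Require Import structures.
From mathcomp Require Import all_boot all_order all_algebra.
From mathcomp Require Import all_classical all_reals all_analysis.
Import Order.TTheory GRing.Theory Num.Theory numFieldNormedType.Exports.
Local Open Scope classical_set_scope.
Local Open Scope ring_scope.
From mathcomp Require Import ring lra.
Ltac nz1 := match goal with
 | |- is_true (?x != 0) => first [ done | (apply/eqP => ?; lra) | (match goal with H : is_true (?p != ?q) |- _ => apply: (contra_neq _ H); move=> ?; nra end) ] end.
Ltac nzs := repeat (apply/andP; split); nz1.



Section S.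
Variable R : realType.
Implicit Types (F Z : R -> R).
Definition mid (a c : R) := (a + c) / 2.
Definition Einf (F : R -> R) (L a c : R) :=
  (F (mid a c) - F a) / (mid a c - a) - (F c - F (mid a c)) / (c - mid a c) + L * (c - a).

Ltac neqz H := apply/eqP => ?; move: H => /eqP; apply; lra.

Lemma Einf_sub_quad F L A B G a c : a != c ->
  Einf (fun t => F t - (A*t^+2 + B*t + G)) (L - A) a c = Einf F L a c.
Proof. move=> ac; rewrite /Einf /mid; field; neqz ac. Qed.

Lemma Einf0 Z a c : a != c ->
  Einf Z 0 a c * ((c - a) / 2) = 2 * Z (mid a c) - Z a - Z c.
Proof.
move=> ac; rewrite /Einf.
have h1 : mid a c - a = (c - a) / 2 by rewrite /mid; field.
have h2 : c - mid a c = (c - a) / 2 by rewrite /mid; field.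
rewrite h1 h2; field; neqz ac.
Qed.

Lemma normP (x y : R) : `|x| <= y -> - y <= x /\ x <= y.
Proof. by rewrite ler_norml => /andP. Qed.

Lemma normI (x y : R) : - y <= x -> x <= y -> `|x| <= y.
Proof. by move=> h1 h2; rewrite ler_norml h1 h2. Qed.

Lemma polyc (A B G : R) : continuous (fun t : R => A * t^+2 + B * t + G).
Proof.
move=> t.
apply: cvgD; last exact: cvg_cst.
apply: cvgD.
  apply: cvgM; first exact: cvg_cst.
  rewrite expr2; apply: cvgM; exact: cvg_id.
apply: cvgM; [exact: cvg_cst | exact: cvg_id].
Qed.

Lemma key_step Z (C M a c : R) : a < c -> `|Einf Z 0 a c| <= C ->
  `|Z a + Z c| <= M -> `|Z (mid a c)| = M -> M <= C * (c - a) / 2.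
Proof.
move=> ac /normP [hE1 hE2] /normP [hS1 hS2] hM.
have e := Einf0 Z a c (negbT (lt_eqF ac)).
have ca : 0 < (c - a) / 2 by lra.
have [e1 e2] : - C * ((c - a) / 2) <= Einf Z 0 a c * ((c - a) / 2)
   /\ Einf Z 0 a c * ((c - a) / 2) <= C * ((c - a) / 2).
  by split; apply: ler_wpM2r; lra.
rewrite e in e1 e2.
have [h|h] := leP 0 (Z (mid a c)).
  rewrite ger0_norm // in hM; lra.
rewrite ltr0_norm // in hM; lra.
Qed.

Lemma arc (F : R -> R) (L C al be : R) : al < be -> continuous F ->
  (forall a c, al <= a <= be -> al <= c <= be -> a != c -> `|Einf F L a c| <= C) ->
  forall t, al <= t <= be ->
  `|F t - (F al + (F be - F al) / (be - al) * (t - al) + L * ((t - al) * (t - be)))|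
     <= C * (be - al) / 2.
Proof.
move=> alb Fc HE.
set k := (F be - F al) / (be - al).
pose A := L; pose B := k - L * (al + be); pose G := F al - k * al + L * al * be.
pose Z := fun t => F t - (A * t^+2 + B * t + G).
have qE : forall t, F al + k * (t - al) + L * ((t - al) * (t - be)) = A * t^+2 + B * t + G.
  by move=> t; rewrite /A /B /G; ring.
suff H : forall t, al <= t <= be -> `|Z t| <= C * (be - al) / 2.
  by move=> t ht; rewrite qE; exact: H.
have Zal : Z al = 0 by rewrite /Z /= -(qE al); ring.
have Zbe : Z be = 0.
  rewrite /Z /= -(qE be) /k; field; apply/eqP => h; move: alb; lra.
have EZ : forall a c, al <= a <= be -> al <= c <= be -> a != c -> `|Einf Z 0 a c| <= C.
  move=> a c ha hc ac.
  have := Einf_sub_quad F L A B G a c ac; rewrite /A subrr => ->.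
  exact: HE.
have C0 : 0 <= C.
  have := HE al be; rewrite !lexx (ltW alb) /= => /(_ isT isT (negbT (lt_eqF alb))).
  exact: le_trans.
have Zc : continuous Z.
  move=> t; apply: cvgB; [exact: Fc | exact: polyc].
have aZc : {within `[al, be], continuous (fun t => `|Z t|)}.
  apply: continuous_subspaceT => t; apply: cvg_norm; exact: Zc.
have [t0 t0in t0max] := @EVT_max R (fun t => `|Z t|) al be (ltW alb) aZc.
rewrite in_itv /= in t0in; move/andP: t0in => [t01 t02].
have tmax : forall t, al <= t <= be -> `|Z t| <= `|Z t0|.
  by move=> t ht; apply: t0max; rewrite in_itv /=.
suff : `|Z t0| <= C * (be - al) / 2.
  by move=> h t ht; exact: le_trans (tmax t ht) h.
have [h|h] := leP (t0 - al) (be - t0).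
  have [e|ne] := eqVneq t0 al.
    rewrite e Zal normr0; apply: mulr_ge0; [apply: mulr_ge0|]; lra.
  have lt0 : al < t0 by rewrite lt_neqAle eq_sym ne t01.
  pose c := 2 * t0 - al.
  have mE : mid al c = t0 by rewrite /mid /c; field.
  have := @key_step Z C `|Z t0| al c.
  rewrite mE Zal add0r => /(_ _ _ _ erefl) H.
  have H1 : `|Z t0| <= C * (c - al) / 2.
    apply: H.
    - rewrite /c; lra.
    - apply: EZ; rewrite /c; [apply/andP; split; lra|apply/andP; split; lra|].
      apply/eqP => ?; lra.
    - apply: tmax; rewrite /c; apply/andP; split; lra.
  apply: le_trans H1 _; rewrite /c; apply: ler_wpM2r => //; apply: ler_wpM2l => //; lra.
have [e|ne] := eqVneq t0 be.
  rewrite e Zbe normr0; apply: mulr_ge0; [apply: mulr_ge0|]; lra.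
have lt0 : t0 < be by rewrite lt_neqAle ne t02.
pose a := 2 * t0 - be.
have mE : mid a be = t0 by rewrite /mid /a; field.
have := @key_step Z C `|Z t0| a be.
rewrite mE Zbe addr0 => /(_ _ _ _ erefl) H.
have H1 : `|Z t0| <= C * (be - a) / 2.
  apply: H.
  - rewrite /a; lra.
  - apply: EZ; rewrite /a; [apply/andP; split; lra|apply/andP; split; lra|].
    apply/eqP => ?; lra.
  - apply: tmax; rewrite /a; apply/andP; split; lra.
apply: le_trans H1 _; rewrite /a; apply: ler_wpM2r => //; apply: ler_wpM2l => //; lra.
Qed.

Lemma pattern (F : R -> R) (L C s : R) : continuous F ->
  (forall a c, -1 <= a <= 1 -> -1 <= c <= 1 -> a != c -> `|Einf F L a c| <= C) ->
  F 0 = s / 2 -> F 1 = - s -> F (-1) = - s -> L = s / 2 -> `|s| <= C / 4 ->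
  forall t, -1 <= t <= 1 -> `|F t| <= 5 / 8 * C * (1 + t ^+ 2).
Proof.
move=> Fc HE F0 F1 Fm1 Ls /normP [s1 s2] t /andP [t1 t2].
have [t0|t0] := leP 0 t.
  have := @arc F L C 0 1 ltr01 Fc.
  have H : forall a c, 0 <= a <= 1 -> 0 <= c <= 1 -> a != c -> `|Einf F L a c| <= C.
    move=> a c /andP [a1 a2] /andP [c1 c2] ac; apply: HE => //;
      apply/andP; split; lra.
  move=> /(_ H t); rewrite t0 t2 /= => /(_ isT) /normP [].
  rewrite F0 F1 Ls !subr0 divr1 => h1 h2.
  have ht : 0 <= (1 - t) ^+ 2 by apply: sqr_ge0.
  apply: normI; move: h1 h2; rewrite ?expr2 => h1 h2; nra.
have := @arc F L C (-1) 0 (@ltrN10 R) Fc.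
have H : forall a c, -1 <= a <= 0 -> -1 <= c <= 0 -> a != c -> `|Einf F L a c| <= C.
  move=> a c /andP [a1 a2] /andP [c1 c2] ac; apply: HE => //;
    apply/andP; split; lra.
move=> /(_ H t); rewrite t1 (ltW t0) /= => /(_ isT) /normP [].
rewrite F0 Fm1 Ls ?opprK ?sub0r ?add0r => h1 h2.
have ht : 0 <= (1 + t) ^+ 2 by apply: sqr_ge0.
apply: normI; move: h1 h2; rewrite ?expr2 => h1 h2; nra.
Qed.
Lemma closed_lim (H : R -> R) (C d : R) : {for 0, continuous H} -> 0 < d ->
  (forall u, u != 0 -> `|u| < d -> `|H u| <= C) -> `|H 0| <= C.
Proof.
move=> Hc d0 Hb.
have hc : `|H x| @[x --> 0^'] --> `|H 0|.
  apply: cvg_norm; exact: (proj1 (continuous_withinNx H 0) Hc).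
apply: (cvgr_to_le hc).
rewrite /dnbhs /within /=.
have h : \forall u \near (0:R), u != 0 -> `|H u| <= C.
  apply/nbhs_norm0P; exists d => // u /= ud u0; exact: Hb.
exact: h.
Qed.

Section Phi.
Variable phi : R * R -> R.
Hypothesis phic : {within @S1 R, continuous phi}.

Lemma comp_S1 (k : R -> R * R) t : {for t, continuous k} -> (forall u, S1 (k u)) ->
  {for t, continuous (phi \o k)}.
Proof.
move=> kc kS.
have := (proj1 (subspace_continuousP _ _) phic) (k t) (kS t).
move=> pc; have pc2 : phi x @[x --> within (@S1 R) (nbhs (k t))] --> phi (k t) := pc.
have h1 : k @ t --> within (@S1 R) (nbhs (k t)).
  move=> P /= hP.
  have h : nbhs t (fun u => S1 (k u) -> P (k u)) := kc _ hP.
  suff : nbhs t (fun u => P (k u)) by [].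
  by apply: filterS h => u /=; apply; exact: kS.
rewrite /prop_for /continuous_at /=.
apply: cvg_trans pc2; exact: (cvg_app phi h1).
Qed.

Lemma ratc (p q : R -> R) t : {for t, continuous p} -> {for t, continuous q} -> q t != 0 ->
  {for t, continuous (fun u => p u / q u)}.
Proof. move=> pc qc q0; apply: cvgM => //; exact: cvgV. Qed.

Lemma pair_cont (f g : R -> R) t : {for t, continuous f} -> {for t, continuous g} ->
  {for t, continuous (fun x => (f x, g x))}.
Proof. by move=> hf hg; apply: (@cvg_pair _ _ _ _ (nbhs (f t)) (nbhs (g t))). Qed.

Lemma cayley_cont t : {for t, continuous (@cayley R)}.
Proof.
have d0 : 1 + t ^+ 2 != 0.
  by apply/eqP => h; have := sqr_ge0 t; lra.
apply: pair_cont.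
  apply: cvgM; last (apply: cvgV => //).
    apply: cvgB; first exact: cvg_cst. rewrite expr2; apply: cvgM; exact: cvg_id.
  apply: cvgD; first exact: cvg_cst. rewrite expr2; apply: cvgM; exact: cvg_id.
apply: cvgM; last (apply: cvgV => //).
  apply: cvgM; [exact: cvg_cst|exact: cvg_id].
apply: cvgD; first exact: cvg_cst. rewrite expr2; apply: cvgM; exact: cvg_id.
Qed.

Lemma cayley_S1 (x : R) : S1 (cayley x).
Proof.
rewrite /S1 /cayley /=.
have d0 : 1 + x ^+ 2 != 0 by apply/eqP => h; have := sqr_ge0 x; lra.
by field.
Qed.

Lemma Xline_cont : continuous (Xline phi).
Proof.
move=> t; rewrite /Xline.
apply: cvgM.
  apply: cvgM; last exact: cvg_cst.
  apply: cvgD; first exact: cvg_cst. rewrite expr2; apply: cvgM; exact: cvg_id.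
by move: (comp_S1 (@cayley R) t (cayley_cont t) cayley_S1); rewrite /prop_for /continuous_at.
Qed.

Variables (m r : R).
Hypothesis r0 : 0 < r.

Definition Yf t := Xline phi (m + r * t) / r.
Definition den s := s ^+ 2 + (m * s - r) ^+ 2.
Definition kap s := ((s ^+ 2 - (m * s - r) ^+ 2) / den s, 2 * s * (m * s - r) / den s).
Definition Vf s := den s / (2 * r) * phi (kap s).

Lemma den_gt0 s : 0 < den s.
Proof.
rewrite /den; have [->|s0] := eqVneq s 0.
  rewrite expr0n /= add0r mulr0 sub0r sqrrN; exact: exprn_gt0.
have : 0 < s ^+ 2 by rewrite exprn_even_gt0.
have := sqr_ge0 (m * s - r); lra.
Qed.

Lemma kap_S1 (s : R) : S1 (kap s).
Proof.
rewrite /S1 /kap /=.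
have d0 : den s != 0 by rewrite gt_eqF // den_gt0.
move: d0; rewrite /den => d0.
by field.
Qed.

Lemma Yf_cont : continuous Yf.
Proof.
move=> t; rewrite /Yf.
apply: cvgM; last exact: cvg_cst.
apply: (@continuous_comp _ _ _ (fun t => m + r * t) (Xline phi)); last exact: Xline_cont.
apply: cvgD; first exact: cvg_cst.
apply: cvgM; [exact: cvg_cst|exact: cvg_id].
Qed.

Lemma cvgX2 (f : R -> R) (t a : R) : f x @[x --> t] --> a -> (f x ^+ 2) @[x --> t] --> a ^+ 2.
Proof. move=> h; apply: cvgM; exact: h. Qed.

Lemma lin_cont t : (m * x - r) @[x --> t] --> m * t - r.
Proof.
apply: cvgB; last exact: cvg_cst.
apply: cvgM; [exact: cvg_cst|exact: cvg_id].
Qed.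

Lemma den_cont t : {for t, continuous den}.
Proof.
rewrite /den; apply: cvgD; apply: cvgX2; [exact: cvg_id|exact: lin_cont].
Qed.

Lemma kap_cont t : {for t, continuous kap}.
Proof.
have d0 : den t != 0 by rewrite gt_eqF // den_gt0.
apply: pair_cont.
  apply: cvgM; last (apply: cvgV => //; exact: den_cont).
  apply: cvgB; apply: cvgX2; [exact: cvg_id|exact: lin_cont].
apply: cvgM; last (apply: cvgV => //; exact: den_cont).
apply: cvgM; last exact: lin_cont.
apply: cvgM; [exact: cvg_cst|exact: cvg_id].
Qed.

Lemma Vf_cont : continuous Vf.
Proof.
move=> t; rewrite /Vf.
apply: cvgM.
  apply: cvgM; [exact: den_cont|exact: cvg_cst].
by move: (comp_S1 kap t (kap_cont t) kap_S1); rewrite /prop_for /continuous_at.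
Qed.

Lemma V_Y s : s != 0 -> Vf s = s ^+ 2 * Yf (- s^-1).
Proof.
move=> s0; rewrite /Vf /Yf /Xline.
have d0 : den s != 0 by rewrite gt_eqF // den_gt0.
have r0' : r != 0 by rewrite gt_eqF.
have -> : cayley (m + r * - s^-1) = kap s.
  rewrite /cayley /kap; move: d0; rewrite /den => d0.
  have d1 : 1 + (m + r * - s^-1) ^+ 2 != 0.
    by apply/eqP => h; have := sqr_ge0 (m + r * - s^-1); lra.
  congr (_, _); field; by rewrite ?s0 ?d0 ?d1.
move: d0; rewrite /den => d0.
field; by rewrite ?s0 ?r0'.
Qed.

Lemma V0 : Vf 0 = r / 2 * phi (-1, 0).
Proof.
rewrite /Vf /kap /den.
have r0' : r != 0 by rewrite gt_eqF.
rewrite !(expr0n, mulr0, sub0r, add0r, mul0r, sqrrN) /=.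
have -> : - r ^+ 2 / r ^+ 2 = -1 by field.
by congr (_ * _); field.
Qed.

Lemma uniq4I (a b c d : R) : a != b -> a != c -> a != d -> b != c -> b != d -> c != d ->
  uniq [:: a; b; c; d].
Proof. by move=> ab ac ad bc bd cd; rewrite /= !inE !negb_or ab ac ad bc bd cd. Qed.

Lemma uniq4E (a b c d : R) : uniq [:: a; b; c; d] ->
  a != b /\ a != c /\ a != d /\ b != c /\ b != d /\ c != d.
Proof.
rewrite /= !inE !negb_or !andbT => /andP [/and3P [ab ac ad] /andP [/andP [bc bd] cd]].
by do !split.
Qed.

Variable C : R.
Hypothesis ZX : forall a b c d, uniq [:: a; b; c; d] -> cr a b c d = 1 ->
  `|Xcr (Xline phi) a b c d| <= C.

Lemma ZY a b c d : uniq [:: a; b; c; d] -> cr a b c d = 1 -> `|Xcr Yf a b c d| <= C.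
Proof.
move=> /[dup] u /uniq4E [ab [ac [ad [bc [bd cd]]]]] h.
have r0' : r != 0 by rewrite gt_eqF.
have e : Xcr Yf a b c d = Xcr (Xline phi) (m + r * a) (m + r * b) (m + r * c) (m + r * d).
  by rewrite /Xcr /Yf; field; nzs.
rewrite e; apply: ZX.
  apply: uniq4I; apply: (contra_neq _ ab) || apply: (contra_neq _ ac) || apply: (contra_neq _ ad)
   || apply: (contra_neq _ bc) || apply: (contra_neq _ bd) || apply: (contra_neq _ cd); move=> ?; nra.
rewrite -h /cr; field; nzs.
Qed.

Lemma ZI_Y a c : a != c -> `|Einf Yf (Vf 0) a c| <= C.
Proof.
move=> ac.
have ca : c - a != 0 by rewrite subr_eq0 eq_sym.
pose bu u := (a + c + 2 * a * c * u) / (2 + (a + c) * u).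
pose H u := (Yf (bu u) - Yf a) / (bu u - a) - (Yf c - Yf (bu u)) / (c - bu u)
  + Vf u * (c - a) / ((1 + c * u) * (1 + a * u)) + Yf c * u / (1 + c * u)
  - Yf a * u / (1 + a * u).
have b0 : bu 0 = mid a c by rewrite /bu /mid; field.
have H0 : H 0 = Einf Yf (Vf 0) a c.
  rewrite /H b0 /Einf /mid; field; nzs.
rewrite -H0.
pose K := `|a| + `|c| + 1.
have K0 : 0 < K by rewrite /K; have := normr_ge0 a; have := normr_ge0 c; lra.
apply: (@closed_lim H C K^-1); last first.
- move=> u u0 uK.
  have kk : K * K^-1 = 1 by rewrite mulfV // gt_eqF.
  have nu := normr_ge0 u.
  have uK1 : `|u| * K < 1 by nra.
  have hau : `|a * u| < 1.
    rewrite normrM; have := normr_ge0 a; have := normr_ge0 c; rewrite /K in uK1; nra.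
  have hcu : `|c * u| < 1.
    rewrite normrM; have := normr_ge0 a; have := normr_ge0 c; rewrite /K in uK1; nra.
  move: hau hcu; rewrite !ltr_norml => /andP [hau1 hau2] /andP [hcu1 hcu2].
  have pa : 0 < 1 + a * u by lra.
  have pc : 0 < 1 + c * u by lra.
  have p2 : 0 < 2 + (a + c) * u by rewrite mulrDl; lra.
  have na : 1 + a * u != 0 by rewrite gt_eqF.
  have nc : 1 + c * u != 0 by rewrite gt_eqF.
  have n2 : 2 + (a + c) * u != 0 by rewrite gt_eqF.
  have e1 : bu u - a = (c - a) * (1 + a * u) / (2 + (a + c) * u) by rewrite /bu; field.
  have e2 : c - bu u = (c - a) * (1 + c * u) / (2 + (a + c) * u) by rewrite /bu; field.
  have e3 : 1 + bu u * u = 2 * (1 + a * u) * (1 + c * u) / (2 + (a + c) * u)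
    by rewrite /bu; field.
  have n1 : bu u - a != 0 by rewrite e1 !mulf_neq0 // invr_neq0.
  have n1' : c - bu u != 0 by rewrite e2 !mulf_neq0 // invr_neq0.
  have n3 : 1 + bu u * u != 0 by rewrite e3 !mulf_neq0 // ?invr_neq0 // pnatr_eq0.
  have hH : H u = Xcr Yf a (bu u) c (- u^-1).
    rewrite /H (V_Y u u0) /Xcr.
    move: n1 n1'; set b := bu u => n1 n1'.
    by field; nzs.
  rewrite hH; apply: ZY.
    have hd : forall x, 1 + x * u != 0 -> x != - u^-1.
      by move=> x hx; apply: contra_neq hx => ->; rewrite mulNr mulVf // subrr.
    apply: uniq4I.
    - by apply: contra_neq n1 => ->; rewrite subrr.
    - by [].
    - exact: hd.
    - by apply: contra_neq n1' => ->; rewrite subrr.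
    - exact: hd.
    - exact: hd.
  by rewrite /cr /bu; field; nzs.
- by rewrite invr_gt0.
have m1 : bu 0 - a != 0 by rewrite b0 /mid; apply/eqP => h; move/eqP: ac; apply; lra.
have m2 : c - bu 0 != 0 by rewrite b0 /mid; apply/eqP => h; move/eqP: ac; apply; lra.
have bu_c : bu x @[x --> 0] --> bu 0.
  rewrite /bu; apply: cvgM.
    apply: cvgD; first exact: cvg_cst.
    apply: cvgM; [exact: cvg_cst|exact: cvg_id].
  apply: cvgV; first by rewrite mulr0 addr0 pnatr_eq0.
  apply: cvgD; first exact: cvg_cst.
  apply: cvgM; [exact: cvg_cst|exact: cvg_id].
have Ybu : Yf (bu x) @[x --> 0] --> Yf (bu 0).
  exact: (continuous_comp bu_c (Yf_cont _)).
have l1 : forall k : R, (1 + k * x) @[x --> 0] --> 1 + k * 0.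
  move=> k; apply: cvgD; first exact: cvg_cst.
  apply: cvgM; [exact: cvg_cst|exact: cvg_id].
have l1n : forall k : R, 1 + k * 0 != 0 by move=> k; rewrite mulr0 addr0 oner_eq0.
rewrite /H.
apply: cvgB; [apply: cvgD; [apply: cvgD; [apply: cvgB|]|]|].
- apply: cvgM; [apply: cvgB; [exact: Ybu|exact: cvg_cst]|].
  apply: cvgV => //; apply: cvgB; [exact: bu_c|exact: cvg_cst].
- apply: cvgM; [apply: cvgB; [exact: cvg_cst|exact: Ybu]|].
  apply: cvgV => //; apply: cvgB; [exact: cvg_cst|exact: bu_c].
- apply: cvgM; [apply: cvgM; [exact: Vf_cont|exact: cvg_cst]|].
  apply: cvgV; first by rewrite mulf_neq0.
  by apply: cvgM; apply: l1.
- apply: cvgM; [apply: cvgM; [exact: cvg_cst|exact: cvg_id]|].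
  by apply: cvgV; [|apply: l1].
- apply: cvgM; [apply: cvgM; [exact: cvg_cst|exact: cvg_id]|].
  by apply: cvgV; [|apply: l1].
Qed.

Lemma Einf_anti (F : R -> R) (L a c : R) : a != c -> Einf F L a c = - Einf F L c a.
Proof. move=> ac; rewrite /Einf /mid [c + a]addrC; field; nzs. Qed.

Lemma ninv_neq (x y : R) : x != y -> - x^-1 != - y^-1.
Proof. by move=> xy; apply: contra_neq xy => /oppr_inj/invr_inj. Qed.

Lemma ZI_V0 (c : R) : c != 0 -> `|Einf Vf (Yf 0) 0 c| <= C.
Proof.
move=> c0.
have c2 : (0 + c) / 2 != 0 by rewrite add0r mulf_neq0 // invr_eq0 pnatr_eq0.
have e : Einf Vf (Yf 0) 0 c = - Einf Yf (Vf 0) (- 2 / c) 0.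
  rewrite /Einf /mid (V_Y _ c0) (V_Y _ c2).
  have -> : - ((0 + c) / 2)^-1 = - 2 / c by field.
  have -> : (- 2 / c + 0) / 2 = - c^-1 by field.
  field; nzs.
rewrite e normrN; apply: ZI_Y.
by rewrite mulf_neq0 // ?oppr_eq0 ?pnatr_eq0 // invr_eq0.
Qed.

Lemma ZI_V (a c : R) : a != c -> `|Einf Vf (Yf 0) a c| <= C.
Proof.
move=> ac.
have [a0|a0] := eqVneq a 0.
  by rewrite a0; apply: ZI_V0; rewrite -a0 eq_sym.
have [c0|c0] := eqVneq c 0.
  by rewrite (Einf_anti _ _ _ _ ac) normrN c0; apply: ZI_V0; rewrite -c0.
have [b0|b0] := eqVneq (mid a c) 0.
  have ce : c = - a by move: b0; rewrite /mid => /eqP; rewrite mulf_eq0 invr_eq0 pnatr_eq0 orbF addr_eq0 => /eqP ->; rewrite opprK.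
  subst c.
  have e : Einf Vf (Yf 0) a (- a) = Einf Yf (Vf 0) a^-1 (- a^-1).
    rewrite /Einf /mid (V_Y _ a0) (V_Y _ c0) !subrr !mul0r invrN opprK.
    field; nzs.
  rewrite e; apply: ZI_Y.
  have ai : a^-1 != 0 by rewrite invr_eq0.
  by apply: contra_neq ai => h; lra.
have e : Einf Vf (Yf 0) a c = Xcr Yf (- a^-1) (- (mid a c)^-1) (- c^-1) 0.
  rewrite /Einf (V_Y _ a0) (V_Y _ b0) (V_Y _ c0) /Xcr.
  move: b0; rewrite /mid => b0.
  field; nzs.
rewrite e; apply: ZY.
  have ab : a != mid a c by rewrite /mid; apply: contra_neq ac => h; lra.
  have bc : mid a c != c by rewrite /mid; apply: contra_neq ac => h; lra.
  by apply: uniq4I; try apply: ninv_neq => //; rewrite oppr_eq0 invr_eq0.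
move: b0; rewrite /cr /mid => b0.
field; nzs.
Qed.

Lemma psi_bound : exists A B G : R,
  (forall t, `|Yf t - (A * t ^+ 2 + B * t + G)| <= 5 / 8 * C * (1 + t ^+ 2))
  /\ `|Vf 0 - A| <= 5 / 8 * C.
Proof.
pose s := (2 * Yf 0 + 2 * Vf 0 - Yf 1 - Yf (-1)) / 4.
pose G := Yf 0 - s / 2; pose A := Vf 0 - s / 2; pose B := (Yf 1 - Yf (-1)) / 2.
have [hs1 hs2] : - (C / 4) <= s /\ s <= C / 4.
  have e : Einf Yf (Vf 0) (-1) 1 = 4 * s.
    by rewrite /Einf /mid /s addNr mul0r; field.
  have n11 : (-1 : R) != 1 by apply/eqP => h; lra.
  have := ZI_Y (-1) 1 n11; rewrite e => /normP [h1 h2]; lra.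
pose psi := fun t => Yf t - (A * t ^+ 2 + B * t + G).
pose W := fun u => Vf u - (G * u ^+ 2 + (- B) * u + A).
have psic : continuous psi by move=> t; apply: cvgB; [exact: Yf_cont|exact: polyc].
have Wc : continuous W by move=> t; apply: cvgB; [exact: Vf_cont|exact: polyc].
have V1 : Vf 1 = Yf (-1) by rewrite (V_Y _ (oner_neq0 R)) expr1n mul1r invr1.
have Vm1 : Vf (-1) = Yf 1.
  by rewrite (V_Y (-1) (negbT (lt_eqF (@ltrN10 R)))) sqrrN expr1n mul1r invrN invr1 opprK.
have Pp := @pattern psi (Vf 0 - A) C s psic.
have Pw := @pattern W (Yf 0 - G) C s Wc.
have Hp : forall t, -1 <= t <= 1 -> `|psi t| <= 5 / 8 * C * (1 + t ^+ 2).
  apply: Pp.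
  - move=> a c _ _ ac; rewrite /psi Einf_sub_quad //; exact: ZI_Y.
  - by rewrite /psi /G /s; field.
  - by rewrite /psi /A /B /G /s; field.
  - by rewrite /psi /A /B /G /s; field.
  - by rewrite /A /s; field.
  - by apply: normI; lra.
have Hw : forall t, -1 <= t <= 1 -> `|W t| <= 5 / 8 * C * (1 + t ^+ 2).
  apply: Pw.
  - move=> a c _ _ ac; rewrite /W Einf_sub_quad //; exact: ZI_V.
  - by rewrite /W /A /s; field.
  - by rewrite /W V1 /A /B /G /s; field.
  - by rewrite /W Vm1 /A /B /G /s; field.
  - by rewrite /G /s; field.
  - by apply: normI; lra.
exists A, B, G; split; last first.
  apply: normI; rewrite /A; lra.
move=> t.
have [ht|ht] := leP `|t| 1.
  by apply: Hp; move: ht; rewrite ler_norml.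
have t0 : t != 0 by apply/eqP => e; move: ht; rewrite e normr0; lra.
pose u := - t^-1.
have u0 : u != 0 by rewrite /u oppr_eq0 invr_eq0.
have tu : t = - u^-1 by rewrite /u invrN invrK opprK.
have Wu : W u = u ^+ 2 * psi t.
  by rewrite /W /psi (V_Y _ u0) -tu; set y := Yf t; rewrite tu; field.
have hu : -1 <= u <= 1.
  rewrite -ler_norml /u normrN normfV invf_le1 //; first exact: ltW.
  exact: lt_trans ltr01 ht.
have := Hw u hu; rewrite Wu normrM.
have -> : `|u ^+ 2| = u ^+ 2 by rewrite ger0_norm // sqr_ge0.
have e2 : u ^+ 2 * t ^+ 2 = 1.
  by rewrite /u sqrrN exprVn mulVf // expf_neq0.
move=> h; have h2 := ler_wpM2l (sqr_ge0 t) h.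
have l : t ^+ 2 * (u ^+ 2 * `|psi t|) = `|psi t| by rewrite mulrA (mulrC (t ^+ 2)) e2 mul1r.
have rr : t ^+ 2 * (5 / 8 * C * (1 + u ^+ 2)) = 5 / 8 * C * (t ^+ 2 + u ^+ 2 * t ^+ 2) by ring.
by move: h2; rewrite l rr e2 addrC.
Qed.
End Phi.

Lemma le_scale (k D y z : R) : 0 <= k -> 0 < D -> y <= z -> k * y / D <= k * z / D.
Proof.
move=> k0 D0 yz; apply: ler_wpM2r; first by rewrite invr_ge0 ltW.
exact: ler_wpM2l.
Qed.

Lemma S1_cayley (z : R * R) : S1 z -> z.1 != -1 -> cayley (z.2 / (1 + z.1)) = z.
Proof.
case: z => z1 z2; rewrite /S1 /= => hz n1.
have d : 1 + z1 != 0 by apply: contra_neq n1 => h; lra.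
have hz2 : z2 ^+ 2 = 1 - z1 ^+ 2 by lra.
have ex2 : (z2 / (1 + z1)) ^+ 2 = (1 - z1) / (1 + z1).
  by rewrite expr_div_n hz2; field.
by rewrite /cayley ex2; congr (_, _); field; nzs.
Qed.
End S.



Definition affc {R : realType} (a2 a1 a0 : R) : R * R * R := ((a2 + a0, a0 - a2), a1).

Lemma affc_cayley (R : realType) (a2 a1 a0 x : R) :
  affine_eval (affc a2 a1 a0) (cayley x) = 2 * (a2 * x ^+ 2 + a1 * x + a0) / (1 + x ^+ 2).
Proof.
rewrite /affine_eval /affc /cayley /=.
have d : 1 + x ^+ 2 != 0 by apply/eqP => h; have := sqr_ge0 x; lra.
by field.
Qed.

Lemma q0_lem (R : realType) : uniq [:: (0:R); 1; 3; -3].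
Proof. by apply: uniq4I; apply/eqP => h; lra. Qed.
Lemma cq_lem (R : realType) : cr (0:R) 1 3 (-3) = 1.
Proof. by rewrite /cr; field. Qed.

Theorem proposition5p1 (R : realType) (phi : R * R -> R) :
  {within @S1 R, continuous phi} ->
  (cr_norm phi < +oo)%E ->
  (width phi <= (8 / 3 : R)%:E * cr_norm phi)%E.
Proof.
move=> phic crf.
have q0 := q0_lem R.
have cq := cq_lem R.
have ub : forall a b c d : R, uniq [:: a; b; c; d] -> cr a b c d = 1 ->
    ((`|Xcr (Xline phi) a b c d|)%:E <= cr_norm phi)%E.
  by move=> a b c d u h; apply: ereal_sup_ubound; exists (a, b, c, d).
have fin : cr_norm phi \is a fin_num.
  rewrite fin_numE; apply/andP; split; last by rewrite lt_eqF.
  apply/eqP => e; have := ub _ _ _ _ q0 cq; rewrite e.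
  by rewrite leeNy_eq.
set C := fine (cr_norm phi).
have cE : cr_norm phi = C%:E by rewrite /C fineK.
have ZX : forall a b c d : R, uniq [:: a; b; c; d] -> cr a b c d = 1 ->
    `|Xcr (Xline phi) a b c d| <= C.
  by move=> a b c d u h; rewrite -lee_fin -cE; exact: ub.
have C0 : 0 <= C by apply: le_trans (ZX _ _ _ _ q0 cq); exact: normr_ge0.
rewrite cE -EFinM.
clear ub cE crf; clearbody C; clear fin.
apply: ge_ereal_sup => _ [[e1 e2] eD <-].
move: eD; rewrite /D2 /= => eD.
set s := Num.sqrt (1 - (e1 ^+ 2 + e2 ^+ 2)).
have s0 : 0 < s by rewrite sqrtr_gt0; lra.
have hs2 : s ^+ 2 = 1 - (e1 ^+ 2 + e2 ^+ 2) by rewrite sqr_sqrtr //; lra.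
have e1b : -1 < e1 by have := sqr_ge0 e2; nra.
pose r := s / (1 + e1); pose m := e2 / (1 + e1).
have r0 : 0 < r by rewrite divr_gt0 //; lra.
have [A [B [G [HB HV]]]] := @psi_bound R phi phic m r r0 C ZX.
pose K := 5 / 8 * C.
pose cp := affc ((A + K) / r) (B - 2 * m * (A + K) / r) ((A + K) * m ^+ 2 / r - B * m + r * G + K * r).
pose cm := affc ((A - K) / r) (B - 2 * m * (A - K) / r) ((A - K) * m ^+ 2 / r - B * m + r * G - K * r).
have r0' : r != 0 by rewrite gt_eqF.
have hphi : forall z, S1 z -> affine_eval cm z <= phi z /\ phi z <= affine_eval cp z.
  move=> [z1 z2] hz.
  have [z1e|n1] := eqVneq z1 (-1).
    have z2e : z2 = 0.
      by move: hz; rewrite /S1 /= z1e sqrrN expr1n => h; apply/eqP; rewrite -sqrf_eq0; apply/eqP; lra.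
    rewrite z1e z2e.
    have pe : phi (-1, 0) = 2 * Vf R phi m r 0 / r by rewrite (V0 _ _ _ _ r0); field.
    have ep : affine_eval cp (-1, 0) = 2 * (A + K) / r by rewrite /affine_eval /cp /affc /=; field.
    have em : affine_eval cm (-1, 0) = 2 * (A - K) / r by rewrite /affine_eval /cm /affc /=; field.
    rewrite pe ep em; move/normP: HV => [h1 h2].
    split; apply: le_scale => //; rewrite /K; lra.
  have hc : cayley (z2 / (1 + z1)) = (z1, z2) := S1_cayley _ (z1, z2) hz n1.
  rewrite -hc.
  set x := z2 / (1 + z1).
  pose t := (x - m) / r.
  have d : 0 < 1 + x ^+ 2 by have := sqr_ge0 x; lra.
  have pe : phi (cayley x) = 2 * (r * Yf R phi m r t) / (1 + x ^+ 2).
    rewrite /Yf /t.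
    have -> : m + r * ((x - m) / r) = x by field.
    rewrite /Xline; field; nzs.
  have ep : affine_eval cp (cayley x) =
      2 * (r * (A * t ^+ 2 + B * t + G) + K * r * (1 + t ^+ 2)) / (1 + x ^+ 2).
    by rewrite /cp affc_cayley /t; congr (_ / _); field.
  have em : affine_eval cm (cayley x) =
      2 * (r * (A * t ^+ 2 + B * t + G) - K * r * (1 + t ^+ 2)) / (1 + x ^+ 2).
    by rewrite /cm affc_cayley /t; congr (_ / _); field.
  rewrite pe ep em; move/normP: (HB t) => [h1 h2].
  have k1 := ler_wpM2l (ltW r0) h1.
  have k2 := ler_wpM2l (ltW r0) h2.
  split; apply: le_scale => //; rewrite /K in k1 k2 *; lra.
have Hp : (phi_plus phi (e1, e2) <= (affine_eval cp (e1, e2))%:E)%E.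
  apply: ereal_inf_lbound; exists cp => //.
  by move=> p hp; case: (hphi p hp).
have Hm : ((affine_eval cm (e1, e2))%:E <= phi_minus phi (e1, e2))%E.
  apply: ereal_sup_ubound; exists cm => //.
  by move=> p hp; case: (hphi p hp).
have HD := leeB Hp Hm.
have si : (0 <= (s^-1)%:E)%E by rewrite lee_fin invr_ge0 ltW.
apply: le_trans (lee_wpmul2r si HD) _.
rewrite -EFinB -EFinM lee_fin.
have DE : affine_eval cp (e1, e2) - affine_eval cm (e1, e2) =
    2 * K / s * ((1 - (e1 ^+ 2 + e2 ^+ 2)) + s ^+ 2).
  rewrite /affine_eval /cp /cm /affc /r /m /=; field; nzs.
rewrite DE -hs2; clear Hp Hm HD si.
have -> : 2 * K / s * (s ^+ 2 + s ^+ 2) * s^-1 = 4 * K by field; nzs.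
rewrite /K; lra.
Qed.
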